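(* For every integer $n \geq 0$, the following polynomial identity holds in $\mathbb{C}[X]$: $$X^{\underline{n}} = B_n^* + \sum_{k=1}^{n} \frac{n}{k}\, s(n-1,k-1)\, B_k(X).$$
   Context: For $n \geq 0$, $X^{\underline{n}} := X(X-1)\cdots(X-n+1)$ ($X^{\underline{0}}=1$). The (signed) Stirling numbers of the first kind $s(n,k)$ ($0\le k\le n$) are defined by $X^{\underline{n}} = \sum_{k=0}^{n} s(n,k) X^k$ for all $n \ge 0$, with $s(n,k)=0$ when $n<k$. The Bernoulli polynomials $B_n(X)$ are defined by $\frac{t e^{Xt}}{e^t-1} = \sum_{n \ge 0} B_n(X) \frac{t^n}{n!}$. The Bernoulli numbers of the second kind $B_n^*$ are defined by $\frac{t}{\log(1+t)} = \sum_{n \ge 0} B_n^* \frac{t^n}{n!}$ (equivalently $B_n^* = \int_0^1 x^{\underline{n}}\,dx$). *)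

(* Defs.v *)
From HB Require Import structures.
From mathcomp Require Import all_boot all_order all_algebra.
Set Implicit Arguments. Unset Strict Implicit. Unset Printing Implicit Defensive.
Import Order.TTheory GRing.Theory Num.Theory.
Local Open Scope ring_scope.

Definition ffpoly (R : nzRingType) (n : nat) : {poly R} :=
  \prod_(i < n) ('X - (i%:R)%:P).

(* Signed Stirling numbers of the first kind: s(n,k) is the coefficient of
   X^k in X^{\underline n} (computed in {poly int}); zero when n < k. *)
Definition stirling1 (n k : nat) : int := (ffpoly int n)`_k.

(* Bernoulli polynomials: the coefficient of t^(m+1) in the defining identity
     t e^{Xt} = (e^t - 1) * \sum_k B_k(X) t^k / k!
   reads  \sum_(k <= m) B_k / (k! (m+1-k)!) = X^m / m!,
   i.e. B_m = X^m - \sum_(k < m) m!/(k! (m+1-k)!) B_k.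
   bern_seq n lists B_0, ..., B_n. *)
Fixpoint bern_seq (F : fieldType) (n : nat) : seq {poly F} :=
  match n with
  | 0 => [:: 1]
  | m.+1 =>
      let s := bern_seq F m in
      rcons s ('X^(m.+1) - \sum_(k < m.+1)
                 ((m.+1)`!%:R / (k`!%:R * (m.+2 - k)`!%:R)) *: s`_k)
  end.

Definition bernoulli_poly (F : fieldType) (n : nat) : {poly F} :=
  (bern_seq F n)`_n.

(* Bernoulli numbers of the second kind: with log(1+t)/t = \sum_j (-1)^j t^j/(j+1),
   the defining identity (\sum_k B*_k t^k/k!) * (log(1+t)/t) = 1 reads
   \sum_(k <= m) B*_k/k! * (-1)^(m-k)/(m-k+1) = [m == 0],
   i.e. B*_0 = 1 and B*_m = - \sum_(k < m) m!/k! * (-1)^(m-k)/(m-k+1) * B*_k. *)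
Fixpoint bern2_seq (F : fieldType) (n : nat) : seq F :=
  match n with
  | 0 => [:: 1]
  | m.+1 =>
      let s := bern2_seq F m in
      rcons s (- \sum_(k < m.+1)
                 ((m.+1)`!%:R / k`!%:R * (-1) ^+ (m.+1 - k) / (m.+2 - k)%:R) * s`_k)
  end.

Definition bernoulli2 (F : fieldType) (n : nat) : F := (bern2_seq F n)`_n.

(* Main.v *)
Require Import Defs.
From HB Require Import structures.
From mathcomp Require Import all_boot all_order all_algebra.
From mathcomp Require Import ring.
Set Implicit Arguments. Unset Strict Implicit. Unset Printing Implicit Defensive.
Import Order.TTheory GRing.Theory Num.Theory.
Local Open Scope ring_scope.

Section S.
Variable F : numFieldType.
Implicit Types p q : {poly F}.

Lemma natS_neq0 (m : nat) : (m.+1%:R : F) != 0.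
Proof. by rewrite pnatr_eq0. Qed.
Lemma onenat_neq0 (m : nat) : (1 + m%:R : F) != 0.
Proof. by rewrite addrC -mulrSr natS_neq0. Qed.
Lemma fact_neq0 (m : nat) : (m`!%:R : F) != 0.
Proof. by rewrite pnatr_eq0 -lt0n fact_gt0. Qed.

Definition Lf p : F := \sum_(i < size p) p`_i / i.+1%:R.
Definition Phi p : {poly F} :=
  \sum_(i < size p) p`_i *: ((i.+1%:R)^-1 *: bernoulli_poly F i.+1).

Lemma LfE N p : (size p <= N)%N -> Lf p = \sum_(i < N) p`_i / i.+1%:R.
Proof.
move=> H; rewrite /Lf (big_ord_widen N (fun i => p`_i / i.+1%:R) H) big_mkcond.
apply: eq_bigr => i _; case: ifP => // /negbT; rewrite -leqNgt => Hi.
by rewrite nth_default // mul0r.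
Qed.

Lemma PhiE N p : (size p <= N)%N -> Phi p =
  \sum_(i < N) p`_i *: ((i.+1%:R)^-1 *: bernoulli_poly F i.+1).
Proof.
move=> H; rewrite /Phi (big_ord_widen N (fun i => p`_i *: ((i.+1%:R)^-1 *: bernoulli_poly F i.+1)) H) big_mkcond.
apply: eq_bigr => i _; case: ifP => // /negbT; rewrite -leqNgt => Hi.
by rewrite nth_default // scale0r.
Qed.

Lemma LfD p q : Lf (p + q) = Lf p + Lf q.
Proof.
have Hp := leq_maxl (size p) (size q); have Hq := leq_maxr (size p) (size q).
rewrite (LfE (size_polyD p q)) (LfE Hp) (LfE Hq) -big_split /=.
by apply: eq_bigr => i _; rewrite coefD mulrDl.
Qed.
Lemma LfZ c p : Lf (c *: p) = c * Lf p.
Proof.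
rewrite (LfE (size_scale_leq c p)) /Lf mulr_sumr.
by apply: eq_bigr => i _; rewrite coefZ mulrA.
Qed.
Lemma Lf0 : Lf 0 = 0.
Proof. by rewrite /Lf size_poly0 big_ord0. Qed.
Lemma Lf_sum I (r : seq I) (P : pred I) (f : I -> {poly F}) :
  Lf (\sum_(i <- r | P i) f i) = \sum_(i <- r | P i) Lf (f i).
Proof. exact: (big_morph Lf LfD Lf0). Qed.

Lemma PhiD p q : Phi (p + q) = Phi p + Phi q.
Proof.
have Hp := leq_maxl (size p) (size q); have Hq := leq_maxr (size p) (size q).
rewrite (PhiE (size_polyD p q)) (PhiE Hp) (PhiE Hq) -big_split /=.
by apply: eq_bigr => i _; rewrite coefD scalerDl.
Qed.
Lemma PhiZ c p : Phi (c *: p) = c *: Phi p.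
Proof.
rewrite (PhiE (size_scale_leq c p)) /Phi scaler_sumr.
by apply: eq_bigr => i _; rewrite coefZ !scalerA.
Qed.
Lemma Phi0 : Phi 0 = 0.
Proof. by rewrite /Phi size_poly0 big_ord0. Qed.

Lemma LfXn n : Lf 'X^n = (n.+1%:R)^-1.
Proof.
rewrite /Lf size_polyXn big_ord_recr /= big1 ?add0r; last first.
  by move=> i _; rewrite coefXn ltn_eqF ?mul0r.
by rewrite coefXn eqxx mul1r.
Qed.
Lemma PhiXn n : Phi 'X^n = (n.+1%:R)^-1 *: bernoulli_poly F n.+1.
Proof.
rewrite /Phi size_polyXn big_ord_recr /= big1 ?add0r; last first.
  by move=> i _; rewrite coefXn ltn_eqF ?scale0r.
by rewrite coefXn eqxx scale1r.
Qed.


Lemma bern_seqS n : bern_seq F n.+1 = rcons (bern_seq F n)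
  ('X^(n.+1) - \sum_(k < n.+1)
      ((n.+1)`!%:R / (k`!%:R * (n.+2 - k)`!%:R)) *: (bern_seq F n)`_k).
Proof. by []. Qed.

Lemma size_bern_seq n : size (bern_seq F n) = n.+1.
Proof. by elim: n => // n IH; rewrite bern_seqS size_rcons IH. Qed.

Lemma bern_seq_nth n k : (k <= n)%N -> (bern_seq F n)`_k = bernoulli_poly F k.
Proof.
elim: n => [|n IH] Hk; first by case: k Hk.
rewrite leq_eqVlt in Hk; case/orP: Hk => [/eqP -> //|Hk].
by rewrite bern_seqS nth_rcons size_bern_seq Hk IH.
Qed.

Lemma bern_rec n : bernoulli_poly F n = 'X^n - \sum_(k < n)
   ((n`!%:R / (k`!%:R * (n.+1 - k)`!%:R)) *: bernoulli_poly F k).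
Proof.
case: n => [|m]; first by rewrite big_ord0 subr0 expr0.
rewrite /bernoulli_poly bern_seqS nth_rcons size_bern_seq ltnn eqxx.
congr (_ - _); apply: eq_bigr => k _; rewrite bern_seq_nth //.
by rewrite -ltnS.
Qed.

Lemma bern_sum n : 'X^n = \sum_(k < n.+1)
   ((n`!%:R / (k`!%:R * (n.+1 - k)`!%:R)) *: bernoulli_poly F k).
Proof.
rewrite big_ord_recr /= subSnn (_ : (1`!)%:R = 1 :> F) ?mulr1 // divff ?fact_neq0 // scale1r (bern_rec n).
by rewrite addrC subrK.
Qed.

Lemma binF n i : (i <= n)%N ->
  ('C(n,i)%:R : F) = n`!%:R / (i`!%:R * (n-i)`!%:R).
Proof.
move=> H; rewrite -(bin_fact H) !natrM mulfK //.
by rewrite mulf_neq0 // fact_neq0.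
Qed.

Definition Dl p := p \Po ('X + 1) - p.
Lemma DlD p q : Dl (p + q) = Dl p + Dl q.
Proof. by rewrite /Dl comp_polyD opprD addrACA. Qed.
Lemma DlZ c p : Dl (c *: p) = c *: Dl p.
Proof. by rewrite /Dl comp_polyZ scalerBr. Qed.
Lemma Dl0 : Dl 0 = 0.
Proof. by rewrite /Dl comp_poly0 subr0. Qed.
Lemma Dl_sum I (r : seq I) (P : pred I) (f : I -> {poly F}) :
  Dl (\sum_(i <- r | P i) f i) = \sum_(i <- r | P i) Dl (f i).
Proof. exact: (big_morph Dl DlD Dl0). Qed.
Lemma Phi_sum I (r : seq I) (P : pred I) (f : I -> {poly F}) :
  Phi (\sum_(i <- r | P i) f i) = \sum_(i <- r | P i) Phi (f i).
Proof. exact: (big_morph Phi PhiD Phi0). Qed.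

Lemma DlXn n : Dl 'X^n = \sum_(i < n) 'C(n, i)%:R *: 'X^i.
Proof.
rewrite /Dl comp_Xn_poly exprD1n big_ord_recr /= binn mulr1n addrK.
by apply: eq_bigr => i _; rewrite scaler_nat.
Qed.

Lemma monoId n : 'X^n = (Lf 'X^n)%:P + Phi (Dl 'X^n).
Proof.
rewrite LfXn DlXn Phi_sum {1}bern_sum big_ord_recl; congr (_ + _).
  rewrite /bernoulli_poly /= subn0 alg_polyC; congr (_%:P).
  rewrite factS natrM (_ : (0`!)%:R = 1 :> F) // mul1r.
  have := fact_neq0 n; have := natS_neq0 n; move=> *; field.
  by rewrite onenat_neq0 fact_neq0.
apply: eq_bigr => i _; rewrite PhiZ PhiXn scalerA !lift0.
rewrite (binF (ltnW (ltn_ord i))) subSS factS natrM; congr (_ *: _).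
have := fact_neq0 i; have := fact_neq0 (n - i); have := natS_neq0 i.
move=> *; field.
by rewrite onenat_neq0 !fact_neq0.
Qed.

Definition Rop p := (Lf p)%:P + Phi (Dl p).
Lemma RopD p q : Rop (p + q) = Rop p + Rop q.
Proof. by rewrite /Rop LfD DlD PhiD polyCD addrACA. Qed.
Lemma Rop0 : Rop 0 = 0.
Proof. by rewrite /Rop Lf0 Dl0 Phi0 addr0. Qed.
Lemma RopZ c p : Rop (c *: p) = c *: Rop p.
Proof. by rewrite /Rop LfZ DlZ PhiZ scalerDr polyCM mul_polyC. Qed.

Lemma keyId p : p = (Lf p)%:P + Phi (Dl p).
Proof.
rewrite -/(Rop p) -{1 2}[p]coefK poly_def.
rewrite (big_morph Rop RopD Rop0); apply: eq_bigr => i _.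
by rewrite RopZ /Rop -monoId.
Qed.


Lemma ffpoly0 : ffpoly F 0 = 1.
Proof. by rewrite /ffpoly big_ord0. Qed.

Lemma ffpolyS n : ffpoly F n.+1 = ffpoly F n * ('X - (n%:R)%:P).
Proof. by rewrite /ffpoly big_ord_recr. Qed.

Lemma size_ff n : (size (ffpoly F n) <= n.+1)%N.
Proof.
elim: n => [|n IH]; first by rewrite ffpoly0 size_poly1.
rewrite ffpolyS; apply: (leq_trans (size_mul_leq _ _)).
by rewrite size_XsubC addn2 /=.
Qed.

Lemma comp_prod I (r : seq I) (P : pred I) (f : I -> {poly F}) q :
  (\prod_(i <- r | P i) f i) \Po q = \prod_(i <- r | P i) (f i \Po q).
Proof.
exact: (big_morph (comp_poly q) (comp_poly_multiplicative q).1 (comp_poly_multiplicative q).2).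
Qed.

Lemma Dl_ff0 : Dl (ffpoly F 0) = 0.
Proof. by rewrite ffpoly0 /Dl (comp_poly_multiplicative _).2 subrr. Qed.

Lemma Dl_ff n : Dl (ffpoly F n.+1) = n.+1%:R *: ffpoly F n.
Proof.
have E : ffpoly F n.+1 \Po ('X + 1) = ('X + 1) * ffpoly F n.
  rewrite /ffpoly comp_prod big_ord_recl /=; congr (_ * _).
    by rewrite comp_polyB comp_polyX comp_polyC subr0.
  apply: eq_bigr => i _; rewrite comp_polyB comp_polyX comp_polyC.
  rewrite /bump leq0n add1n mulrSr polyCD polyC1 opprD addrACA subrr addr0 //.
rewrite /Dl E ffpolyS -mul_polyC mulrSr polyCD polyC1; ring.
Qed.

Lemma ff_coef n i : (ffpoly F n)`_i = (stirling1 n i)%:~R.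
Proof.
have -> : ffpoly F n = map_poly intr (ffpoly int n).
  rewrite /ffpoly rmorph_prod; apply: eq_bigr => j _.
  rewrite /= map_polyXsubC; congr (_ - _%:P); symmetry; apply: rmorph_nat.
by rewrite coef_map.
Qed.

Lemma deriv1F : (1 : {poly F})^`() = 0.
Proof. by rewrite derivE. Qed.
Lemma horner1F (x : F) : (1 : {poly F}).[x] = 1.
Proof. by rewrite hornerE. Qed.

Lemma DlB p q : Dl (p - q) = Dl p - Dl q.
Proof. rewrite /Dl comp_polyB; ring. Qed.

Lemma Dl_deriv p : Dl (deriv p) = deriv (Dl p).
Proof.
by rewrite /Dl derivB deriv_comp derivD derivX deriv1F addr0 mulr1.
Qed.

Lemma Dl0_const q : Dl q = 0 -> q = (q.[0])%:P.
Proof.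
move=> /eqP; rewrite subr_eq0 => /eqP Hq.
have Hk : forall k : nat, q.[k%:R] = q.[0].
  elim=> [|k IH]; first by [].
  by rewrite -IH -[q in RHS]Hq horner_comp hornerD hornerX horner1F mulrSr.
apply/eqP; rewrite -subr_eq0; apply/negPn/negP => Hr.
set r := q - (q.[0])%:P in Hr *.
set rs := mkseq (fun k : nat => (k%:R : F)) (size r).
have Hall : all (root r) rs.
  apply/allP => x /mapP [k _ ->].
  by rewrite /root /r hornerD hornerN hornerC Hk subrr.
have Hu : uniq rs by apply: mkseq_uniq => a b; exact: (mulrIn (oner_neq0 F)).
by have := max_poly_roots Hr Hall Hu; rewrite size_mkseq ltnn.
Qed.

Lemma ff_at0 n : (ffpoly F n.+1).[0] = 0.
Proof. by rewrite /ffpoly horner_prod big_ord_recl /= hornerXsubC subrr mul0r. Qed.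

Lemma ff_at1 n : (ffpoly F n.+2).[1] = 0.
Proof.
by rewrite /ffpoly horner_prod big_ord_recl big_ord_recl /= !hornerXsubC (_ : bump 0 0 = 1)%N // subrr mul0r mulr0.
Qed.


Lemma stepd (f : {poly F}) (c : F) : (deriv (f * ('X - c%:P))).[0] = (deriv f).[0] * (- c) + f.[0].
Proof.
by rewrite derivM derivXsubC mulr1 hornerD hornerM hornerXsubC sub0r.
Qed.

Lemma dff n : (deriv (ffpoly F n.+1)).[0] = (-1)^+n * n`!%:R.
Proof.
elim: n => [|n IH].
  by rewrite ffpolyS stepd ffpoly0 deriv1F horner1F horner0 mul0r add0r expr0 mul1r.
rewrite ffpolyS stepd IH ff_at0 addr0 factS natrM exprS; ring.
Qed.

Lemma Lf_deriv p : Lf (deriv p) = p.[1] - p.[0].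
Proof.
have Hs : (size p^`() <= size p)%N.
  by case: (eqVneq p 0) => [->|hp]; [rewrite deriv0 | exact: ltnW (lt_size_deriv hp)].
rewrite (LfE Hs) (horner_coef_wide _ (leqnSn (size p))) big_ord_recl horner_coef0.
rewrite expr0 mulr1 [p`_ord0 + _]addrC addrK; apply: eq_bigr => i _.
by rewrite coef_deriv -[p`_i.+1 *+ _]mulr_natr mulfK ?natS_neq0 // expr1n mulr1 lift0.
Qed.

Definition ginv (m k : nat) : F := (-1)^+(m - k) / (k`!%:R * (m.+1 - k)%:R).
Definition Gp m := \sum_(k < m.+1) ginv m k *: ffpoly F k.
Definition Hp m := ((m.+1)`!%:R)^-1 *: deriv (ffpoly F m.+1).

Lemma DlH m : Dl (Hp m.+1) = Hp m.
Proof.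
rewrite /Hp DlZ Dl_deriv Dl_ff derivZ scalerA; congr (_ *: _).
rewrite (factS m.+1) natrM.
have := fact_neq0 m.+1; have := natS_neq0 m.+1; move=> *; field.
by rewrite fact_neq0 -natrD pnatr_eq0.
Qed.

Lemma bump0S (i : nat) : bump 0 i = i.+1.
Proof. by []. Qed.

Lemma DlG m : Dl (Gp m.+1) = Gp m.
Proof.
rewrite /Gp Dl_sum big_ord_recl /= DlZ Dl_ff0 scaler0 add0r.
apply: eq_bigr => i _; rewrite DlZ bump0S Dl_ff scalerA; congr (_ *: _).
have Hi : (i <= m)%N by rewrite -ltnS.
rewrite /ginv !subSS (subSn Hi) factS natrM.
have := fact_neq0 i; have := natS_neq0 i; have := natS_neq0 (m - i).
have := natS_neq0 (m - i).+1; move=> *; field.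
by rewrite !onenat_neq0 fact_neq0.
Qed.

Lemma HG m : Hp m = Gp m.
Proof.
elim: m => [|m IH].
  rewrite /Hp /Gp big_ord1 ffpolyS ffpoly0 mul1r derivXsubC /ginv /=.
  congr (_%:A); rewrite subnn expr0 subn0 (_ : (1`!)%:R = 1 :> F) // invr1.
  by rewrite [X in 1 / X](_ : _ = 1) ?invr1 ?mulr1 // mulr1.
have HD : Dl (Hp m.+1 - Gp m.+1) = 0 by rewrite DlB DlH DlG IH subrr.
have := Dl0_const HD; rewrite hornerD hornerN.
have -> : (Hp m.+1).[0] = (Gp m.+1).[0].
  rewrite /Hp /Gp hornerZ dff horner_sum big_ord_recl /= big1; last first.
    by move=> i _; rewrite hornerZ bump0S ff_at0 mulr0.
  rewrite addr0 hornerZ ffpoly0 horner1F mulr1 /ginv subn0.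
  rewrite (_ : (0`!)%:R = 1 :> F) // mul1r (factS m.+1) natrM.
  have := fact_neq0 m.+1; have := natS_neq0 m.+1; rewrite (subn0 m.+2); move=> *; field.
  by rewrite fact_neq0 -natrD pnatr_eq0.
by rewrite subrr => /eqP; rewrite subr_eq0 => /eqP.
Qed.

Lemma Eid m : \sum_(k < m.+1) ginv m k * Lf (ffpoly F k) = (m == 0)%:R.
Proof.
have -> : \sum_(k < m.+1) ginv m k * Lf (ffpoly F k) = Lf (Hp m).
  by rewrite HG /Gp Lf_sum; apply: eq_bigr => k _; rewrite LfZ.
rewrite /Hp LfZ Lf_deriv ff_at0 subr0.
case: m => [|m].
  rewrite ffpolyS ffpoly0 mul1r hornerXsubC subr0 mulr1 /=.
  by rewrite (_ : (1`!)%:R = 1 :> F) // invr1.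
by rewrite ff_at1 mulr0.
Qed.

Lemma bern2_seqS n : bern2_seq F n.+1 = rcons (bern2_seq F n)
  (- \sum_(k < n.+1)
      ((n.+1)`!%:R / k`!%:R * (-1) ^+ (n.+1 - k) / (n.+2 - k)%:R) * (bern2_seq F n)`_k).
Proof. by []. Qed.

Lemma size_bern2_seq n : size (bern2_seq F n) = n.+1.
Proof. by elim: n => // n IH; rewrite bern2_seqS size_rcons IH. Qed.

Lemma termEq n (i : nat) (a : F) : (i <= n)%N ->
  (n.+1)`!%:R / i`!%:R * (-1) ^+ (n.+1 - i) / (n.+2 - i)%:R * a =
  (n.+1)`!%:R * (ginv n.+1 i * a).
Proof.
move=> Hi; have H1 : (n.+2 - i)%:R != 0 :> F by rewrite subSn ?leqW // natS_neq0.
have H2 := fact_neq0 i.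
rewrite /ginv; field.
by rewrite H1 H2.
Qed.

Lemma bern2_main n k : (k <= n)%N -> (bern2_seq F n)`_k = Lf (ffpoly F k).
Proof.
elim: n k => [|n IH] k Hk.
  by case: k Hk => // _; rewrite ffpoly0 -(expr0 'X) LfXn invr1.
rewrite leq_eqVlt in Hk; case/orP: Hk => [/eqP ->|Hk]; last first.
  by rewrite bern2_seqS nth_rcons size_bern2_seq Hk IH.
rewrite bern2_seqS nth_rcons size_bern2_seq ltnn eqxx.
have := Eid n.+1; rewrite big_ord_recr /=.
move=> /eqP; rewrite addrC addr_eq0 => /eqP HE.
have -> : Lf (ffpoly F n.+1) =
   (n.+1)`!%:R * (ginv n.+1 n.+1 * Lf (ffpoly F n.+1)).
  rewrite mulrA /ginv subnn expr0 subSn // subnn mul1r.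
  by rewrite (_ : (1%N)%:R = 1 :> F) // mulr1 divff ?mul1r // fact_neq0.
rewrite HE mulrN mulr_sumr; congr (- _); apply: eq_bigr => i _.
have Hi : (i <= n)%N by rewrite -ltnS.
by rewrite IH // termEq.
Qed.

Lemma Lf_ff n : Lf (ffpoly F n) = bernoulli2 F n.
Proof. by rewrite /bernoulli2 bern2_main. Qed.

End S.

Theorem theorem3 (F : numFieldType) (n : nat) :
  ffpoly F n =
    (bernoulli2 F n)%:P +
    \sum_(1 <= k < n.+1)
      ((n%:R / k%:R) * (stirling1 n.-1 k.-1)%:~R) *: bernoulli_poly F k.
Proof.
rewrite {1}(keyId (ffpoly F n)) Lf_ff; congr (_ + _).
case: n => [|m]; first by rewrite Dl_ff0 Phi0 big_geq.
rewrite Dl_ff PhiZ (PhiE (size_ff F m)) big_add1 /= big_mkord scaler_sumr.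
apply: eq_bigr => i _; rewrite ff_coef !scalerA; congr (_ *: _).
by rewrite mulrAC.
Qed.
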